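(* Let $y(\tau_s)=(q_s,v_s,t_s)\in\mathbb{R}^{n_q}\times\mathbb{R}^{n_q}\times\mathbb{R}$ be given such that $f_c(q_s)=0$ and $n(q_s)^\top v_s\le 0$. Then the ordinary differential equation $$y'=f_{\mathrm{aux,n}}(y):=\begin{bmatrix}\mathbf{0}_{n_q,1}\\ M(q)^{-1}n(q)\,a_{\mathrm{n}}\\ 0\end{bmatrix},$$ with a constant $a_{\mathrm{n}}>0$, is an auxiliary dynamical system (in the sense defined in the context), with jump duration $$\tau_{\mathrm{jump}}=-\frac{n(q_s)^\top v_s}{D(q_s)\,a_{\mathrm{n}}}.$$
   Context: Let $f_c:\mathbb{R}^{n_q}\to\mathbb{R}$ and $M:\mathbb{R}^{n_q}\to\mathbb{R}^{n_q\times n_q}$ be at least twice continuously differentiable, with $M(q)$ symmetric positive definite for all $q$. Let $n(q):=\nabla_q f_c(q)$ and $D(q):=n(q)^\top M(q)^{-1}n(q)$. The state is $y=(q,v,t)\in\mathbb{R}^{n_q}\times\mathbb{R}^{n_q}\times\mathbb{R}$ ($q$ position, $v$ velocity, $t$ clock state / physical time), evolving in numerical time $\tau$, with $y'=\mathrm{d}y/\mathrm{d}\tau$. An auxiliary dynamical system $y'(\tau)=f_{\mathrm{aux,n}}(y(\tau))$ is one that satisfies, for every initial value $y(\tau_s)=(q_s,v_s,t_s)$ with $f_c(q_s)=0$ and $n(q_s)^\top v_s<0$, on a well-defined finite time interval $(\tau_s,\tau_r)$ of length $\tau_{\mathrm{jump}}=\tau_r-\tau_s$, the properties: (i) $f_c(q(\tau))\le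 0$ and $t'(\tau)=0$ for all $\tau\in(\tau_s,\tau_r)$; (ii) $n(q(\tau_r))^\top v(\tau_r)=0$; (iii) $f_c(q(\tau_r))=0$. *)

(* Defs.v *)
From HB Require Import structures.
From mathcomp Require Import all_boot all_order all_algebra.
From mathcomp Require Import all_classical all_reals all_analysis.
Set Implicit Arguments. Unset Strict Implicit. Unset Printing Implicit Defensive.
Import Order.TTheory GRing.Theory Num.Theory.
Import numFieldNormedType.Exports.
Local Open Scope ring_scope.
Local Open Scope classical_set_scope.

Section Defs.
Context {R : realType} {nq : nat}.

Definition ecv (i : 'I_nq) : 'cV[R]_nq := delta_mx i 0.

Definition partial (f : 'cV[R]_nq -> R) (i : 'I_nq) (q : 'cV[R]_nq) : R :=
  'D_(ecv i) f q.

(* twice continuously differentiable: all first and second partial derivatives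
   exist everywhere and the second ones are continuous
   (equivalent to C^2 in finite dimension) *)
Definition C2 (f : 'cV[R]_nq -> R) : Prop :=
  (forall i q, derivable f q (ecv i)) /\
  (forall i j q, derivable (partial f i) q (ecv j)) /\
  (forall i j, continuous (partial (partial f i) j)).

Definition grad (f : 'cV[R]_nq -> R) (q : 'cV[R]_nq) : 'cV[R]_nq :=
  \col_i partial f i q.

Definition Dq (fc : 'cV[R]_nq -> R) (M : 'cV[R]_nq -> 'M[R]_nq) (q : 'cV[R]_nq) : R :=
  ((grad fc q)^T *m invmx (M q) *m grad fc q) 0 0.

Definition sym_pos_def (A : 'M[R]_nq) : Prop :=
  A^T = A /\ forall x : 'cV[R]_nq, x != 0 -> 0 < (x^T *m A *m x) 0 0.

Definition state := ('cV[R]_nq * 'cV[R]_nq * R)%type.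

Definition f_aux_n (fc : 'cV[R]_nq -> R) (M : 'cV[R]_nq -> 'M[R]_nq) (an : R)
  (y : state) : state :=
  (0, an *: (invmx (M y.1.1) *m grad fc y.1.1), 0).

Definition ode_solution (f : state -> state) (y : R -> state) (ts tr : R) (y0 : state) : Prop :=
  y ts = y0 /\ {within `[ts, tr], continuous y} /\
  (forall tau, ts < tau < tr -> is_derive tau 1 y (f (y tau))).

Definition aux_props (fc : 'cV[R]_nq -> R) (y : R -> state) (ts tr : R) : Prop :=
  (forall tau, ts < tau < tr ->
     fc (y tau).1.1 <= 0 /\ derive1 (fun s => (y s).2) tau = 0) /\
  ((grad fc (y tr).1.1)^T *m (y tr).1.2) 0 0 = 0 /\
  fc (y tr).1.1 = 0.
End Defs.

(* Main.v *)
Require Import Defs.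
From HB Require Import structures.
From mathcomp Require Import all_boot all_order all_algebra.
From mathcomp Require Import all_classical all_reals all_analysis.
From mathcomp Require Import ring.
Import Order.TTheory GRing.Theory Num.Theory.
Import numFieldNormedType.Exports.
Local Open Scope ring_scope.
Local Open Scope classical_set_scope.

Section S.
Context {R : realType}.
Lemma derive_proj (V W : normedModType R) (p : V -> W) (y : R -> V) (x : R) (l : V) :
  continuous p -> (forall u w, p (u - w) = p u - p w) -> (forall (a:R) u, p (a *: u) = a *: p u) ->
  is_derive x (1:R) y l -> is_derive x (1:R) (p \o y) (p l).
Proof.
move=> pc pB pZ [dy <-].
have cv : _ --> 'D_1 y x := dy.
have cv2 : (fun h : R => h^-1 *: (((p \o y) \o shift x) (h *: 1) - (p \o y) x)) @ 0^' --> p ('D_1 y x).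
  have -> : (fun h : R => h^-1 *: (((p \o y) \o shift x) (h *: 1) - (p \o y) x)) =
     p \o (fun h : R => h^-1 *: ((y \o shift x) (h *: 1) - y x)).
    by apply/funext => h /=; rewrite pZ pB.
  exact: cvg_comp cv (pc _).
split; [exact: (cvgP _ cv2) | exact: (cvg_lim _ cv2)].
Qed.

Lemma fst_cont (U V : normedModType R) : continuous (@fst U V).
Proof. move=> z; exact: cvg_fst. Qed.
Lemma snd_cont (U V : normedModType R) : continuous (@snd U V).
Proof. move=> z; exact: cvg_snd. Qed.
End S.

Lemma Dpos {R : realType} {nq : nat} (A : 'M[R]_nq) (n : 'cV[R]_nq) :
  sym_pos_def A -> n != 0 -> 0 < (n^T *m invmx A *m n) 0 0.
Proof.
move=> [sA pA] n0.
case: (boolP (A \in unitmx)) => uA; last first.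
  by rewrite invmx_out ?inE //; apply: pA.
set w := invmx A *m n.
have nE : n = A *m w by rewrite /w mulmxA mulmxV // mul1mx.
have w0 : w != 0.
  by apply: contraNneq n0 => w0; rewrite nE w0 mulmx0.
rewrite -mulmxA -/w {1}nE trmx_mul sA; exact: pA.
Qed.

Lemma Dzero {R : realType} {nq : nat} (A : 'M[R]_nq) (n : 'cV[R]_nq) :
  sym_pos_def A -> (n^T *m invmx A *m n) 0 0 = 0 -> n = 0.
Proof.
move=> sp D0; apply/eqP; apply: contraT => n0.
by have := @Dpos _ _ _ _ sp n0; rewrite D0 ltxx.
Qed.

Lemma within_comp {R : realType} (A : set R) (V W : topologicalType) (y : R -> V) (p : V -> W) :
  continuous p -> {within A, continuous y} -> {within A, continuous (p \o y)}.
Proof. move=> pc yc x; exact: (@continuous_comp (subspace A) V W y p x (yc x) (pc _)). Qed.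

Lemma cont_pq {R : realType} {nq : nat} (i : 'I_nq) :
  continuous (fun z : @state R nq => z.1.1 i 0).
Proof.
have h : continuous (fun z : @state R nq => z.1.1).
  by move=> z; apply: continuous_comp; exact: fst_cont.
move=> z; exact: (@continuous_comp _ _ _ _ (fun M : 'cV[R]_nq => M i 0) z (h z) (@coord_continuous R nq 1 i 0 _)).
Qed.

Lemma cont_pv {R : realType} {nq : nat} (i : 'I_nq) :
  continuous (fun z : @state R nq => z.1.2 i 0).
Proof.
have h : continuous (fun z : @state R nq => z.1.2).
  by move=> z; apply: continuous_comp; [exact: fst_cont | exact: snd_cont].
move=> z; exact: (@continuous_comp _ _ _ _ (fun M : 'cV[R]_nq => M i 0) z (h z) (@coord_continuous R nq 1 i 0 _)).
Qed.

Theorem proposition1 (R : realType) (nq : nat)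
  (fc : 'cV[R]_nq -> R) (M : 'cV[R]_nq -> 'M[R]_nq) (an : R)
  (tau_s : R) (qs vs : 'cV[R]_nq) (ts : R) :
  C2 fc ->
  (forall i j, C2 (fun q => M q i j)) ->
  (forall q, sym_pos_def (M q)) ->
  0 < an ->
  fc qs = 0 ->
  ((grad fc qs)^T *m vs) 0 0 <= 0 ->
  let tau_jump := - ((grad fc qs)^T *m vs) 0 0 / (Dq fc M qs * an) in
  0 <= tau_jump /\
  (exists y : R -> state, ode_solution (f_aux_n fc M an) y tau_s (tau_s + tau_jump) (qs, vs, ts)) /\
  (forall y : R -> state,
     ode_solution (f_aux_n fc M an) y tau_s (tau_s + tau_jump) (qs, vs, ts) ->
     aux_props fc y tau_s (tau_s + tau_jump)).
Proof.
move=> _ _ spd an0 fq0 c0.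
set n := grad fc qs in c0 *.
set c := (n^T *m vs) 0 0 in c0 *.
set tj := - c / (Dq fc M qs * an).
set w := invmx (M qs) *m n.
have DE : Dq fc M qs = (n^T *m w) 0 0 by rewrite /Dq mulmxA.
have D0 : 0 <= Dq fc M qs.
  case: (eqVneq n 0) => [n0|n0]; first by rewrite /Dq -/n n0 trmx0 !mul0mx mxE.
  exact/ltW/Dpos.
have tj0 : 0 <= tj by rewrite /tj divr_ge0 ?oppr_ge0 // mulr_ge0 // ltW.
split => //.
split.
  pose d : state := (0, an *: w, 0).
  pose y := fun tau : R => ((qs, vs, ts) - tau_s *: d) + tau *: d.
  have yd : forall tau, is_derive tau (1:R) y (f_aux_n fc M an (y tau)).
    move=> tau.
    have -> : f_aux_n fc M an (y tau) = 0 + 1 *: d.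
      by rewrite /f_aux_n /y /d /= !scaler0 subr0 addr0 add0r scale1r.
    apply: is_deriveD.
    have := @derive_proj _ _ _ (fun r : R => r *: d) id tau 1 (@scalel_continuous _ _ d).
    apply => //; [move=> u v; exact: scalerBl | move=> a u /=; by rewrite scalerA].
  exists y; split; first by rewrite /y subrK.
  split.
    apply: continuous_subspaceT => x.
    apply: differentiable_continuous; apply/derivable1_diffP.
    by have [] := yd x.
  by move=> tau _; exact: yd.
move=> y [y0 [yc yd]].
set b := tau_s + tj.
have [tjz|tjp] := eqVneq tj 0.
  have c_0 : c = 0.
    move: tjz; rewrite /tj => /eqP; rewrite mulf_eq0 oppr_eq0 invr_eq0 mulf_eq0 (gt_eqF an0) orbF.
    case/orP => [/eqP //|/eqP Dz].
    have nz := @Dzero _ _ _ _ (spd qs) Dz.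
    by rewrite /c /n nz trmx0 mul0mx mxE.
  rewrite /b tjz addr0; split.
    by move=> tau /andP[h1 h2]; have := lt_trans h1 h2; rewrite ltxx.
  by rewrite y0 /=; split.
have tjpos : 0 < tj by rewrite lt_def tjp tj0.
have ab : tau_s < b by rewrite /b ltrDl.
have qconst : forall tau, tau_s <= tau <= b -> (y tau).1.1 = qs.
  move=> tau /andP[h1 h2]; apply/matrixP => i j; rewrite (ord1 j).
  have hd : forall x, x \in `]tau_s, tau[%R -> is_derive x (1:R) (fun s => (y s).1.1 i 0) 0.
    move=> x; rewrite in_itv /= => /andP[x1 x2].
    apply: is_derive_eq.
      apply: (@derive_proj _ _ _ (fun z : state => z.1.1 i 0) y x).
      + exact: cont_pq.
      + by move=> [[a1 a2] a3] [[b1 b2] b3] /=; rewrite !mxE.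
      + by move=> a [[a1 a2] a3] /=; rewrite !mxE.
      + apply: yd; rewrite x1 /=; exact: lt_le_trans x2 h2.
    by rewrite /= mxE.
  have hc : {within `[tau_s, tau], continuous (fun s => (y s).1.1 i 0)}.
    apply: (@continuous_subspaceW _ _ _ `[tau_s, b]).
      move=> x /=; rewrite !in_itv /= => /andP[-> xt]; exact: le_trans xt h2.
    exact: (@within_comp _ _ _ _ y (fun z : state => z.1.1 i 0) (cont_pq i) yc).
  have := MVT_segment h1 hd hc; case.
  move=> c' _; rewrite mul0r => /eqP; rewrite subr_eq0 y0 => /eqP ->.
  by [].
split.
  move=> tau /andP[h1 h2]; split.
    by rewrite qconst ?fq0 // !ltW.
  rewrite derive1E.
  have yd' : is_derive tau (1:R) y (f_aux_n fc M an (y tau)) by apply: yd; rewrite h1 h2.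
  have := @derive_proj _ _ _ snd y tau _ (snd_cont _ _) (fun _ _ => erefl) (fun _ _ => erefl) yd'.
  by case=> _ dv; exact: dv.
split; last by rewrite qconst ?fq0 // lexx ltW.
have vb : (y b).1.2 = vs + (tj * an) *: w.
  apply/matrixP => i j; rewrite (ord1 j).
  have hd : forall x, x \in `]tau_s, b[%R -> is_derive x (1:R) (fun s => (y s).1.2 i 0) ((an *: w) i 0).
    move=> x; rewrite in_itv /= => /andP[x1 x2].
    apply: is_derive_eq.
      apply: (@derive_proj _ _ _ (fun z : state => z.1.2 i 0) y x).
      + exact: cont_pv.
      + by move=> [[a1 a2] a3] [[b1 b2] b3] /=; rewrite !mxE.
      + by move=> a [[a1 a2] a3] /=; rewrite !mxE.
      + apply: yd; by rewrite x1 x2.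
    by rewrite /= qconst // !ltW.
  have hc : {within `[tau_s, b], continuous (fun s => (y s).1.2 i 0)}.
    exact: (@within_comp _ _ _ _ y (fun z : state => z.1.2 i 0) (cont_pv i) yc).
  have := MVT_segment (ltW ab) hd hc; case.
  move=> c' _; rewrite y0 /= => /eqP; rewrite subr_eq => /eqP ->.
  rewrite /b (addrC tau_s) addrK !mxE; ring.
have Dn0 : Dq fc M qs != 0.
  apply: contra tjp => /eqP Dz; by rewrite /tj Dz mul0r invr0 mulr0.
rewrite qconst ?lexx ?ltW // vb -/n mulmxDr -scalemxAr mxE [X in _ + X]mxE -/c -DE /tj.
field.
by rewrite Dn0 (gt_eqF an0).
Qed.
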